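(* Let $h:(0,\infty)\to[0,\infty)$ be such that there exist $C\ge1$ and $\beta>0$ with $h(s)+C\ge\frac{1}{C}\min\left(1,\frac{t^{\beta}}{s^{\beta}}\right)h(t)$ for all $t,s\in(0,\infty)$. Then there exists $A\ge1$ such that for every $x\in(0,\infty)$, $H(x)\le h(x)\le AH(x)+A$, where $H$ is the largest convex minorant of $h$.
   Context: The largest convex minorant $H$ of $h$ is the largest convex function on $(0,\infty)$ with $H\le h$. *)

(* Defs.v *)
From Stdlib Require Import Reals.
Open Scope R_scope.

Definition convex_on_pos (f : R -> R) : Prop :=
  forall x y l : R, 0 < x -> 0 < y -> 0 <= l <= 1 ->
    f (l * x + (1 - l) * y) <= l * f x + (1 - l) * f y.

Definition largest_convex_minorant (h H : R -> R) : Prop :=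
  convex_on_pos H /\
  (forall x, 0 < x -> H x <= h x) /\
  (forall g : R -> R, convex_on_pos g -> (forall x, 0 < x -> g x <= h x) ->
     forall x, 0 < x -> g x <= H x).

(* Main.v *)
Require Import Defs.
From Stdlib Require Import Reals Lra.
Open Scope R_scope.

Lemma Rpower_pos' a b : 0 < Rpower a b.
Proof. unfold Rpower; apply exp_pos. Qed.

Theorem proposition2p24 (h : R -> R) (C beta : R)
  (h_nonneg : forall s, 0 < s -> 0 <= h s)
  (HC : 1 <= C) (Hbeta : 0 < beta)
  (Hcond : forall t s, 0 < t -> 0 < s ->
     h s + C >= / C * Rmin 1 (Rpower t beta / Rpower s beta) * h t)
  (H : R -> R) (HH : largest_convex_minorant h H) :
  exists A : R, 1 <= A /\
    forall x, 0 < x -> H x <= h x /\ h x <= A * H x + A.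
Proof.
  destruct HH as [Hconv Hrest]. destruct Hrest as [Hle Hmax].
  set (Pw := Rpower 2 beta).
  assert (HP : 1 <= Pw).
  { unfold Pw. rewrite <- (Rpower_O 2) by lra. apply Rle_Rpower; lra. }
  exists (2 * C * Pw + C * C * Pw).
  split. { assert (1 <= C * Pw) by nra. nra. }
  intros x0 Hx0. split; [now apply Hle|].
  set (m := h x0).
  assert (Hm : 0 <= m) by (apply h_nonneg; lra).
  set (D := Rmax 0 ((m / (C * Pw) - C) / 2)).
  assert (Hlow : forall x, 0 < x -> x <= 2 * x0 -> 2 * D <= h x).
  { intros x Hx Hx2. unfold D. apply Rmax_case.
    - rewrite Rmult_0_r. now apply h_nonneg.
    - assert (Hc := Hcond x0 x Hx0 Hx).
      assert (Hr : / Pw <= Rmin 1 (Rpower x0 beta / Rpower x beta)).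
      { apply Rmin_glb.
        - rewrite <- Rinv_1. apply Rinv_le_contravar; lra.
        - assert (Hpx0 := Rpower_pos' x0 beta).
          assert (Hpx := Rpower_pos' x beta).
          assert (Rpower x beta <= Pw * Rpower x0 beta).
          { unfold Pw. rewrite Rpower_mult_distr by lra.
            apply Rle_Rpower_l; lra. }
          unfold Rdiv. apply (Rmult_le_reg_l Pw); [lra|].
          apply (Rmult_le_reg_r (Rpower x beta)); [lra|].
          field_simplify; [|lra|lra]. lra. }
      assert (HcP : 0 < C * Pw) by nra.
      assert (/ C * / Pw * m <= / C * Rmin 1 (Rpower x0 beta / Rpower x beta) * m).
      { apply Rmult_le_compat_r; [lra|]. apply Rmult_le_compat_l; [|lra].
        left; apply Rinv_0_lt_compat; lra. }
      assert (/ C * / Pw * m = m / (C * Pw)) by (field; lra).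
      fold m in Hc. lra. }
  assert (HD : 0 <= D) by (unfold D; apply Rmax_l).
  set (k := D / x0).
  assert (Hk : 0 <= k) by (unfold k; apply Rmult_le_pos; [lra| left; apply Rinv_0_lt_compat; lra]).
  set (g := fun x => Rmax 0 (2 * D - k * x)).
  assert (Hg_conv : convex_on_pos g).
  { intros x y l Hx Hy Hl. unfold g.
    assert (E : 2 * D - k * (l * x + (1 - l) * y) =
                l * (2 * D - k * x) + (1 - l) * (2 * D - k * y)) by ring.
    rewrite E.
    assert (H1 := Rmax_l 0 (2 * D - k * x)).
    assert (H2 := Rmax_r 0 (2 * D - k * x)).
    assert (H3 := Rmax_l 0 (2 * D - k * y)).
    assert (H4 := Rmax_r 0 (2 * D - k * y)).
    apply Rmax_lub; nra. }
  assert (Hg_le : forall x, 0 < x -> g x <= h x).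
  { intros x Hx. unfold g. apply Rmax_lub; [now apply h_nonneg|].
    destruct (Rle_dec x (2 * x0)).
    - assert (Hl := Hlow x Hx r). nra.
    - assert (k * x >= 2 * D).
      { unfold k. unfold Rdiv.
        assert (D * / x0 * x = D * (x / x0)) by (field; lra).
        assert (2 <= x / x0).
        { apply (Rmult_le_reg_r x0); [lra|]. unfold Rdiv.
          rewrite Rmult_assoc, Rinv_l by lra. lra. }
        nra. }
      assert (0 <= h x) by (now apply h_nonneg). lra. }
  assert (HgH := Hmax g Hg_conv Hg_le x0 Hx0).
  assert (Hgx0 : g x0 = D).
  { unfold g, k. replace (2 * D - D / x0 * x0) with D by (field; lra).
    apply Rmax_right; lra. }
  rewrite Hgx0 in HgH.
  assert (Hkey : m <= 2 * C * Pw * D + C * C * Pw).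
  { assert (HcP : 0 < C * Pw) by nra.
    assert (Hd : (m / (C * Pw) - C) / 2 <= D) by (unfold D; apply Rmax_r).
    assert (E : 2 * C * Pw * ((m / (C * Pw) - C) / 2) = m - C * C * Pw) by (field; lra).
    nra. }
  fold m.
  assert (1 <= C * Pw) by nra.
  assert (2 * C * Pw * D <= (2 * C * Pw + C * C * Pw) * H x0).
  { apply Rle_trans with ((2 * C * Pw + C * C * Pw) * D).
    - assert (0 <= C * C * Pw) by nra. nra.
    - apply Rmult_le_compat_l; nra. }
  assert (0 <= C * C * Pw) by nra.
  lra.
Qed.
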